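(* Let $N\ge1$, $\Gamma\in\{\Gamma_0(N),\Gamma_1(N)\}$, $k\in\mathbb{Z}$, $m\in\mathbb{Z}_{>0}$, and let $\varphi$ be a meromorphic Jacobi form of weight $k$ and index $m$ w.r.t. $\Gamma\ltimes\mathbb{Z}^2$ with simple poles at $z=z_s=\alpha\tau+\beta$ for $s=(\alpha,\beta)\in S(\varphi)\subset\mathbb{Q}^2$. Then $D_{(\alpha+\lambda,\beta+\mu)}(\tau)=\mathbf{e}(m(\mu\alpha-\lambda\beta))D_{(\alpha,\beta)}(\tau)$ for $(\lambda,\mu)\in\mathbb{Z}^2$, and $D_s(\frac{a\tau+b}{c\tau+d})=(c\tau+d)^{k-1}D_{s\gamma}(\tau)$ for $\gamma=\begin{pmatrix}a&b\\c&d\end{pmatrix}\in\Gamma$, where $s\gamma=(a\alpha+c\beta,b\alpha+d\beta)$.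
   Context: $\mathbf{e}(t)=e^{2\pi it}$. $\Gamma_0(N)$: $c\equiv0\bmod N$; $\Gamma_1(N)$: also $a\equiv d\equiv1\bmod N$. A meromorphic Jacobi form of weight $k$, index $m$ for $\Gamma\ltimes\mathbb{Z}^2$ is a function on $\mathbb{H}\times\mathbb{C}$, meromorphic in $z$ and weakly holomorphic in $\tau$, with $\varphi(\frac{a\tau+b}{c\tau+d},\frac z{c\tau+d})=(c\tau+d)^k\mathbf{e}(\frac{mcz^2}{c\tau+d})\varphi(\tau,z)$ for $\gamma\in\Gamma$ and $\varphi(\tau,z+\lambda\tau+\mu)=\mathbf{e}(-m(\lambda^2\tau+2\lambda z))\varphi(\tau,z)$ for $(\lambda,\mu)\in\mathbb{Z}^2$. $D_s(\tau)=2\pi i\,\mathbf{e}(m\alpha z_s)\operatorname{Res}_{z=z_s}\varphi(\tau,z)$. *)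

(* Defs.v *)
From HB Require Import structures.
From mathcomp Require Import all_boot all_order all_algebra.
From mathcomp Require Import complex.
From mathcomp Require Import boolp classical_sets reals sequences exp trigo.
Set Implicit Arguments. Unset Strict Implicit. Unset Printing Implicit Defensive.
Import Order.TTheory GRing.Theory Num.Theory.
Local Open Scope ring_scope.

Section Defs.
Variable R : realType.
Local Notation C := R[i].

Definition Imc (z : C) : R := complex.Im z.
Definition in_H (tau : C) : Prop := 0 < Imc tau.

Definition cexp (z : C) : C :=
  ((expR (complex.Re z))%:C * (cos (complex.Im z) +i* sin (complex.Im z)))%C.

Definition ee (t : C) : C := cexp (2%:R * (pi%:C)%C * 'i%C * t).

Definition climit (f : C -> C) (z0 l : C) : Prop :=
  forall eps : R, 0 < eps -> exists2 delta : R, 0 < delta &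
    forall z : C, 0 < `|z - z0| -> `|z - z0| < (delta%:C)%C ->
      `|f z - l| < (eps%:C)%C.

Definition cdiff (f : C -> C) (z0 : C) : Prop :=
  exists l, climit (fun z => (f z - f z0) / (z - z0)) z0 l.

(* residue at a simple pole: Res_{z=z0} f = lim_{z -> z0} (z - z0) f(z)
   (junk value 0 if the limit does not exist) *)
Definition simple_res (f : C -> C) (z0 : C) : C :=
  xget 0 [set l | climit (fun z => (z - z0) * f z) z0 l].

Definition zs (s : rat * rat) (tau : C) : C := ratr s.1 * tau + ratr s.2.

Definition poles (S : set (rat * rat)) (tau z : C) : Prop :=
  exists2 s, S s & z = zs s tau.

(* Gamma_0(N) (G1 = false) or Gamma_1(N) (G1 = true); matrices (a b; c d) *)
Definition inGamma (G1 : bool) (N : nat) (a b c d : int) : Prop :=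
  a * d - b * c = 1 /\ (N%:Z %| c)%Z /\
  (G1 -> (a == 1 %[mod N%:Z])%Z /\ (d == 1 %[mod N%:Z])%Z).

Definition intC (n : int) : C := n%:~R.

(* meromorphic Jacobi form of weight k, index m for Gamma |x Z^2, whose poles
   are exactly the simple poles z = z_s, s in S *)
Definition mero_jacobi_simple (G1 : bool) (N : nat) (k : int) (m : nat)
    (phi : C -> C -> C) (S : set (rat * rat)) : Prop :=
  (forall tau z, in_H tau -> exists2 delta : R, 0 < delta &
      forall w, 0 < `|w - z| -> `|w - z| < (delta%:C)%C -> ~ poles S tau w) /\
  (forall tau z, in_H tau -> ~ poles S tau z ->
      cdiff (phi tau) z /\ cdiff (fun t => phi t z) tau) /\
  (forall s tau, S s -> in_H tau ->
      exists2 l, l != 0 & climit (fun z => (z - zs s tau) * phi tau z) (zs s tau) l) /\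
  (forall a b c d, inGamma G1 N a b c d -> forall tau z, in_H tau -> ~ poles S tau z ->
      phi ((intC a * tau + intC b) / (intC c * tau + intC d))
          (z / (intC c * tau + intC d))
      = (intC c * tau + intC d) ^ k
        * ee (m%:R * intC c * z ^+ 2 / (intC c * tau + intC d)) * phi tau z) /\
  (forall (lam mu : int) tau z, in_H tau -> ~ poles S tau z ->
      phi tau (z + intC lam * tau + intC mu)
      = ee (- (m%:R * (intC lam ^+ 2 * tau + 2%:R * intC lam * z))) * phi tau z).

Definition Dres (m : nat) (phi : C -> C -> C) (s : rat * rat) (tau : C) : C :=
  2%:R * (pi%:C)%C * 'i%C * ee (m%:R * ratr s.1 * zs s tau)
  * simple_res (phi tau) (zs s tau).

End Defs.

(* Main.v *)
Set Warnings "-notation-overridden,-ambiguous-paths".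
Require Import Defs.
From HB Require Import structures.
From mathcomp Require Import all_boot all_order all_algebra.
From mathcomp Require Import complex.
From mathcomp Require Import boolp classical_sets reals sequences exp trigo.
From mathcomp Require Import topology normedtype.
From mathcomp Require Import ring lra.
Import Order.TTheory GRing.Theory Num.Theory.
Import numFieldNormedType.Exports.
Set Implicit Arguments. Unset Strict Implicit.
Local Open Scope ring_scope.

Section Aux.
Variable R : realType.
Local Notation C := R[i].
Local Notation n := (@Normc.normc R).

Lemma nC (z : C) : `|z| = ((n z)%:C)%C.
Proof. by []. Qed.

Lemma n_ge0 (z : C) : 0 <= n z.
Proof. by case: z => a b; rewrite /= sqrtr_ge0. Qed.

Lemma nD (x y : C) : n (x + y) <= n x + n y.
Proof. exact: le_normcD. Qed.

Lemma nM (x y : C) : n (x * y) = n x * n y.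
Proof. exact: Normc.normcM. Qed.

Lemma n0 : n 0 = 0.
Proof. exact: Normc.normc0. Qed.

Lemma n_eq0 (z : C) : n z = 0 -> z = 0.
Proof. exact: Normc.eq0_normc. Qed.

Lemma n_real (r : R) : n ((r%:C)%C) = `|r|.
Proof. by rewrite /= expr0n /= addr0 sqrtr_sqr. Qed.

Lemma n_cplx (a b : R) : n ((a +i* b)%C) <= `|a| + `|b|.
Proof.
have -> : (a +i* b)%C = ((a%:C)%C + (0 +i* b)%C) by apply/eqP; rewrite eq_complex /= addr0 add0r !eqxx.
apply: le_trans (nD _ _) _; rewrite n_real lerD2l /= expr0n add0r sqrtr_sqr //.
Qed.

Lemma nRe (z : C) : `|complex.Re z| <= n z.
Proof.
case: z => a b /=; rewrite -sqrtr_sqr ler_sqrt ?addr_ge0 ?sqr_ge0 //.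
by rewrite lerDl sqr_ge0.
Qed.

Lemma nIm (z : C) : `|complex.Im z| <= n z.
Proof.
case: z => a b /=; rewrite -sqrtr_sqr ler_sqrt ?addr_ge0 ?sqr_ge0 //.
by rewrite lerDr sqr_ge0.
Qed.

Lemma n_gt0 (z : C) : z != 0 -> 0 < n z.
Proof.
move=> z0; rewrite lt_def n_ge0 andbT; apply/eqP => /n_eq0 h.
by rewrite h eqxx in z0.
Qed.

Lemma ltc0 (a : R) : (0 < ((a%:C)%C) :> C) = (0 < a).
Proof. exact: ltcR. Qed.

Definition Lim (f : C -> C) (z0 l : C) : Prop :=
  forall e : R, 0 < e -> exists2 d : R, 0 < d &
    forall z, 0 < n (z - z0) -> n (z - z0) < d -> n (f z - l) < e.

Definition Ct (f : C -> C) (z0 : C) : Prop :=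
  forall e : R, 0 < e -> exists2 d : R, 0 < d &
    forall z, n (z - z0) < d -> n (f z - f z0) < e.

Lemma climitE f z0 l : climit f z0 l <-> Lim f z0 l.
Proof.
split => H e e0.
  have [d d0 Hd] := H e e0; exists d => // z h1 h2.
  by rewrite -ltcR; apply: Hd; rewrite nC ?ltc0 ?ltcR.
have [d d0 Hd] := H e e0; exists d => // z h1 h2.
by rewrite nC ltcR; apply: Hd; move: h1 h2; rewrite nC ?ltc0 ?ltcR.
Qed.


Lemma Lim_Ct f z0 : Ct f z0 -> Lim f z0 (f z0).
Proof. by move=> H e e0; have [d d0 Hd] := H e e0; exists d => // z _ /Hd. Qed.

Lemma Ct_Lim f z0 : Lim f z0 (f z0) -> Ct f z0.
Proof.
move=> H e e0; have [d d0 Hd] := H e e0; exists d => // z hz.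
have [h|h] := eqVneq (z - z0) 0.
  by move/eqP: h; rewrite subr_eq0 => /eqP ->; rewrite subrr n0.
by apply: Hd => //; apply: n_gt0.
Qed.

Lemma Lim_unique f z0 l1 l2 : Lim f z0 l1 -> Lim f z0 l2 -> l1 = l2.
Proof.
move=> H1 H2; apply/eqP; apply/negPn/negP => hne.
have hpos : 0 < n (l1 - l2) by apply: n_gt0; rewrite subr_eq0.
set e := n (l1 - l2) / 2.
have e0 : 0 < e by rewrite /e divr_gt0.
have [d1 d10 Hd1] := H1 e e0; have [d2 d20 Hd2] := H2 e e0.
set d := Num.min d1 d2.
have d0 : 0 < d by rewrite lt_min d10 d20.
set z := z0 + (((d / 2)%:C)%C).
have hz : n (z - z0) = d / 2.
  have -> : z - z0 = (((d / 2)%:C)%C) by rewrite /z; ring.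
  by rewrite n_real ger0_norm // divr_ge0 // ltW.
have hz0 : 0 < n (z - z0) by rewrite hz divr_gt0.
have hzd : n (z - z0) < d1.
  rewrite hz; apply: (@lt_le_trans _ _ d); first by rewrite ltr_pdivrMr // ltr_pMr // ltr1n.
  by rewrite ge_min lexx.
have hzd2 : n (z - z0) < d2.
  rewrite hz; apply: (@lt_le_trans _ _ d); first by rewrite ltr_pdivrMr // ltr_pMr // ltr1n.
  by rewrite ge_min lexx orbT.
have a1 := Hd1 z hz0 hzd; have a2 := Hd2 z hz0 hzd2.
have : n (l1 - l2) <= n (f z - l2) + n (f z - l1).
  have -> : l1 - l2 = (f z - l2) - (f z - l1) by ring.
  by apply: le_trans (nD _ _) _; rewrite normcN.
rewrite /e in a1 a2; lra.
Qed.

Lemma Lim_ext f g z0 l : Lim f z0 l ->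
  (exists2 r : R, 0 < r & forall z, 0 < n (z - z0) -> n (z - z0) < r -> f z = g z) ->
  Lim g z0 l.
Proof.
move=> H [r r0 Hr] e e0; have [d d0 Hd] := H e e0.
exists (Num.min d r); first by rewrite lt_min d0 r0.
move=> z h1; rewrite lt_min => /andP[h2 h3].
by rewrite -Hr //; apply: Hd.
Qed.

Lemma Lim_affine h w0 l (q t z1 : C) : Lim h w0 l -> q != 0 -> q * z1 + t = w0 ->
  Lim (fun z => h (q * z + t)) z1 l.
Proof.
move=> H q0 E e e0; have [d d0 Hd] := H e e0.
have nq := n_gt0 q0.
exists (d / n q); first by rewrite divr_gt0.
move=> z h1 h2.
have hE : q * z + t - w0 = q * (z - z1) by rewrite -E; ring.
apply: Hd; rewrite hE nM.
  by rewrite mulr_gt0.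
by rewrite mulrC -ltr_pdivlMr.
Qed.

Lemma Lim_add f g z0 l m : Lim f z0 l -> Lim g z0 m -> Lim (fun z => f z + g z) z0 (l + m).
Proof.
move=> Hf Hg e e0.
have e20 : 0 < e / 2 by rewrite divr_gt0.
have [d1 d10 Hd1] := Hf _ e20; have [d2 d20 Hd2] := Hg _ e20.
exists (Num.min d1 d2); first by rewrite lt_min d10 d20.
move=> z h1; rewrite lt_min => /andP[h2 h3].
have a1 := Hd1 z h1 h2; have a2 := Hd2 z h1 h3.
have -> : f z + g z - (l + m) = (f z - l) + (g z - m) by ring.
apply: le_lt_trans (nD _ _) _; lra.
Qed.

Lemma Lim_mul f g z0 l m : Lim f z0 l -> Lim g z0 m -> Lim (fun z => f z * g z) z0 (l * m).
Proof.
move=> Hf Hg e e0.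
set A := n l; set B := n m.
have A0 : 0 <= A by apply: n_ge0.
have B0 : 0 <= B by apply: n_ge0.
set del := Num.min 1 (e / (1 + A + B)).
have P0 : 0 < 1 + A + B by lra.
have del0 : 0 < del by rewrite lt_min ltr01 divr_gt0.
have del1 : del <= 1 by rewrite ge_min lexx.
have dele : del * (1 + A + B) <= e.
  rewrite -ler_pdivlMr //; by rewrite ge_min lexx orbT.
have [d1 d10 Hd1] := Hf _ del0; have [d2 d20 Hd2] := Hg _ del0.
exists (Num.min d1 d2); first by rewrite lt_min d10 d20.
move=> z h1; rewrite lt_min => /andP[h2 h3].
have a1 := Hd1 z h1 h2; have a2 := Hd2 z h1 h3.
have -> : f z * g z - l * m = (f z - l) * (g z - m) + ((f z - l) * m + l * (g z - m)) by ring.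
apply: le_lt_trans (nD _ _) _.
rewrite nM.
have := nD ((f z - l) * m) (l * (g z - m)); rewrite !nM -/A -/B => hb.
set a := n (f z - l) in a1 hb *; set b := n (g z - m) in a2 hb *.
have a0 : 0 <= a by apply: n_ge0.
have b0 : 0 <= b by apply: n_ge0.
have : a * b <= del * del by rewrite ler_pM // ltW.
have : a * B <= del * B by rewrite ler_wpM2r // ltW.
have : A * b <= A * del by rewrite ler_wpM2l // ltW.
have : a * b < del by nra.
nra.
Qed.

Lemma Lim_const c z0 : Lim (fun _ => c) z0 c.
Proof. by move=> e e0; exists 1 => // z _ _; rewrite subrr n0. Qed.

Lemma Lim_id z0 : Lim id z0 z0.
Proof. by move=> e e0; exists e. Qed.

Lemma Ct_comp g h z0 : Ct g z0 -> Ct h (g z0) -> Ct (fun z => h (g z)) z0.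
Proof.
move=> Hg Hh e e0; have [d d0 Hd] := Hh e e0; have [d' d'0 Hd'] := Hg d d0.
by exists d' => // z /Hd' /Hd.
Qed.


Lemma cont_ed (f : R -> R) : continuous f -> forall a e, 0 < e ->
  exists2 d, 0 < d & forall x, `|x - a| < d -> `|f x - f a| < e.
Proof.
move=> cf a e e0.
have := cf a => /cvgrPdist_lt /(_ e e0) /nbhs_ballP [d d0 H].
exists d => // x xa.
rewrite distrC; apply: H.
by rewrite /ball /= distrC.
Qed.

Lemma ReB (z w : C) : complex.Re (z - w) = complex.Re z - complex.Re w.
Proof. by case: z; case: w. Qed.

Lemma ImB (z w : C) : complex.Im (z - w) = complex.Im z - complex.Im w.
Proof. by case: z; case: w. Qed.

Lemma Ct_X z0 : Ct (fun z => ((expR (complex.Re z))%:C)%C) z0.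
Proof.
move=> e e0; have [d d0 Hd] := cont_ed (@continuous_expR R) (complex.Re z0) e0.
exists d => // z hz.
rewrite -rmorphB n_real; apply: Hd.
by apply: le_lt_trans hz; rewrite -ReB nRe.
Qed.

Lemma Ct_Y z0 : Ct (fun z => (cos (complex.Im z) +i* sin (complex.Im z))%C) z0.
Proof.
move=> e e0.
have e20 : 0 < e / 2 by rewrite divr_gt0.
have [d1 d10 Hd1] := cont_ed (@continuous_cos R) (complex.Im z0) e20.
have [d2 d20 Hd2] := cont_ed (@continuous_sin R) (complex.Im z0) e20.
exists (Num.min d1 d2); first by rewrite lt_min d10 d20.
move=> z; rewrite lt_min => /andP[h1 h2].
have hI : `|complex.Im z - complex.Im z0| <= n (z - z0) by rewrite -ImB nIm.
have a1 := Hd1 _ (le_lt_trans hI h1); have a2 := Hd2 _ (le_lt_trans hI h2).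
apply: le_lt_trans (n_cplx _ _) _; lra.
Qed.

Lemma Ct_cexp z0 : Ct (@cexp R) z0.
Proof. apply: Ct_Lim; exact: (Lim_mul (Lim_Ct (Ct_X z0)) (Lim_Ct (Ct_Y z0))). Qed.

Lemma Ct_ee t : Ct (@ee R) t.
Proof.
rewrite /ee; apply: (Ct_comp (g := fun t => 2%:R * (pi%:C)%C * 'i%C * t)).
  by apply: Ct_Lim; apply: Lim_mul; [apply: Lim_const | apply: Lim_id].
exact: Ct_cexp.
Qed.

Lemma cexp_add (u v : C) : cexp (u + v) = cexp u * cexp v.
Proof.
case: u => a b; case: v => c d; rewrite /cexp /=.
rewrite expRD cosD sinD.
apply/eqP; rewrite eq_complex /=; apply/andP; split; apply/eqP; ring.
Qed.


Lemma ee_add (x y : C) : ee (x + y) = ee x * ee y.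
Proof. by rewrite /ee mulrDr cexp_add. Qed.

Lemma ee0 : ee (0 : C) = 1.
Proof.
rewrite /ee mulr0 /cexp /= expR0 cos0 sin0.
by apply/eqP; rewrite eq_complex /= !mul1r !mul0r subr0 addr0 !eqxx.
Qed.

Lemma ee1 : ee (1 : C) = 1.
Proof.
rewrite /ee mulr1 /cexp /=.
have -> : ((1 + 1) * pi - (0 + 0) * 0) * 0 - ((1 + 1) * 0 + (0 + 0) * pi) * 1 = 0 :> R by ring.
have -> : ((1 + 1) * pi - (0 + 0) * 0) * 1 + ((1 + 1) * 0 + (0 + 0) * pi) * 0 = pi *+ 2 :> R.
  by rewrite mulr2n; ring.
rewrite expR0 cos2pi sin2pi.
by apply/eqP; rewrite eq_complex /= !mul1r !mul0r subr0 addr0 !eqxx.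
Qed.

Lemma eeN (x : C) : ee (- x) * ee x = 1.
Proof. by rewrite -ee_add addNr ee0. Qed.

Lemma ee_nat (k : nat) : ee (k%:R : C) = 1.
Proof.
elim: k => [|k IH]; first by rewrite ee0.
by rewrite -addn1 natrD ee_add IH ee1 mulr1.
Qed.

Lemma ee_int (k : int) : ee (k%:~R : C) = 1.
Proof.
case: k => k; first by rewrite -pmulrn ee_nat.
have h := eeN (k.+1%:R : C); rewrite ee_nat mulr1 in h.
by rewrite NegzE mulrNz -pmulrn.
Qed.


Lemma res_eq f z0 l : Lim (fun z => (z - z0) * f z) z0 l -> simple_res f z0 = l.
Proof.
move=> H; rewrite /simple_res; apply: xget_unique; first by apply/climitE.
by move=> y /climitE Hy; exact: Lim_unique Hy H.
Qed.

Lemma intC_real (k : int) : intC R k = (((k%:~R : R)%:C)%C).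
Proof. by rewrite /intC rmorph_int. Qed.

Lemma gamma_H (a b c d : int) (tau : C) : a * d - b * c = 1 -> in_H tau ->
  intC R c * tau + intC R d != 0 /\
  in_H ((intC R a * tau + intC R b) / (intC R c * tau + intC R d)).
Proof.
move=> det; rewrite /in_H /Imc !intC_real.
have : (a%:~R * d%:~R - b%:~R * c%:~R : R) = 1.
  by rewrite -!intrM -intrB det.
move: (a%:~R : R) (b%:~R : R) (c%:~R : R) (d%:~R : R) => a' b' c' d' det'.
case: tau => x y /= y0.
have D0 : 0 < (c' * x - 0 * y + d') ^+ 2 + (c' * y + 0 * x + 0) ^+ 2.
  rewrite !mul0r subr0 !addr0.
  rewrite lt_def addr_ge0 ?sqr_ge0 // andbT paddr_eq0 ?sqr_ge0 //.
  rewrite !sqrf_eq0; apply/negP => /andP[/eqP h1 /eqP h2].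
  move: h2 => /eqP; rewrite mulf_eq0 (gt_eqF y0) orbF => /eqP c0.
  rewrite c0 mul0r add0r in h1.
  by move: det'; rewrite c0 h1 !mulr0 subr0 => /eqP; rewrite eq_sym oner_eq0.
split.
  apply/negP; rewrite eq_complex /= => /andP[/eqP h1 /eqP h2].
  by move: D0; rewrite h1 h2 expr0n /= addr0 ltxx.
set D := (_ + _) in D0 *.
have -> : (a' * x - 0 * y + b') * - ((c' * y + 0 * x + 0) / D) +
  (a' * y + 0 * x + 0) * ((c' * x - 0 * y + d') / D) = y * (a' * d' - b' * c') / D.
  by field; rewrite gt_eqF.
by rewrite det' mulr1 divr_gt0.
Qed.

Lemma ee_addint (Y : C) (j : int) : ee (Y + (j%:~R : C)) = ee Y.
Proof. by rewrite ee_add ee_int mulr1. Qed.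

End Aux.

Lemma ident1 (R : realType) (M a1 a2 L Mu tau : R[i]) :
  M * (a1 + L) * (a1*tau + a2 + (L*tau + Mu)) + (-(M*(L^+2*tau)) + -(M*(2*L))*(a1*tau+a2))
  = M*(Mu*a1 - L*a2) + M*a1*(a1*tau+a2) + M*L*Mu.
Proof. ring. Qed.

Lemma ident2 (R : realType) (K A B Z W l : R[i]) :
  A * B = Z * W -> K * A * (l * B) = Z * (K * W * l).
Proof. by move=> h; transitivity (K * l * (A * B)); [ring | rewrite h; ring]. Qed.

Lemma ident3 (R : realType) (A B Cc D al be tau : R[i]) : Cc * tau + D != 0 ->
  (Cc * tau + D)^-1 * ((A * al + Cc * be) * tau + (B * al + D * be)) + 0
  = al * ((A * tau + B) / (Cc * tau + D)) + be.
Proof. by move=> h; field. Qed.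

Lemma ident4 (R : realType) (q Q w w0 P E1 E2 : R[i]) : q != 0 -> Q != 0 -> E2 * E1 = 1 ->
  (w / q - (q^-1 * w0 + 0)) * (Q * E1 * P) * (q * Q^-1 * E2) = (w - w0) * P.
Proof.
move=> hq hQ hE.
transitivity ((w / q - q^-1 * w0) * q * (Q / Q) * (E2 * E1) * P); first ring.
by rewrite hE divff // mulr1; field.
Qed.

Lemma ident5 (R : realType) (M A B Cc D al be tau : R[i]) :
  A * D - B * Cc = 1 -> Cc * tau + D != 0 ->
  M * (A * al + Cc * be) * ((A * al + Cc * be) * tau + (B * al + D * be)) +
  - (M * Cc / (Cc * tau + D)) * (((A * al + Cc * be) * tau + (B * al + D * be)) *
     ((A * al + Cc * be) * tau + (B * al + D * be)))
  = M * al * ((Cc * tau + D)^-1 * ((A * al + Cc * be) * tau + (B * al + D * be)) + 0).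
Proof.
move=> det hq.
set W := (A * al + Cc * be) * tau + (B * al + D * be).
set q := Cc * tau + D.
have h1 : (A * al + Cc * be) * q - Cc * W = al.
  by rewrite /q /W -[RHS]mulr1 -det; ring.
transitivity (M * W * ((A * al + Cc * be) * q - Cc * W) / q); first by field.
by rewrite h1; field.
Qed.

Lemma ident6 (R : realType) (K X Y Z l q Q P : R[i]) :
  Y * Z = X -> P * q * Q^-1 = 1 -> K * X * l = P * (K * Y * (l * (q * Q^-1 * Z))).
Proof.
move=> h1 h2; rewrite -h1.
transitivity (K * Y * Z * l * (P * q * Q^-1)); first by rewrite h2 mulr1 !mulrA.
ring.
Qed.

Unset Implicit Arguments.

Theorem proposition3p2 (R : realType) (N : nat) (G1 : bool) (k : int) (m : nat)
    (phi : R[i] -> R[i] -> R[i]) (S : set (rat * rat)) :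
  (1 <= N)%N -> (0 < m)%N ->
  mero_jacobi_simple G1 N k m phi S ->
  (forall (s : rat * rat) (lam mu : int) (tau : R[i]), S s -> in_H tau ->
     Dres m phi (s.1 + lam%:~R, s.2 + mu%:~R) tau
     = ee (m%:R * ratr (mu%:~R * s.1 - lam%:~R * s.2)) * Dres m phi s tau) /\
  (forall (s : rat * rat) (a b c d : int) (tau : R[i]), S s -> inGamma G1 N a b c d ->
     in_H tau ->
     Dres m phi s ((intC R a * tau + intC R b) / (intC R c * tau + intC R d))
     = (intC R c * tau + intC R d) ^ (k - 1)
       * Dres m phi (a%:~R * s.1 + c%:~R * s.2, b%:~R * s.1 + d%:~R * s.2) tau).
Proof.
move=> _ _ [Hiso [Hhol [Hsimple [Hmod Hell]]]].
have iso : forall tau z, in_H tau -> exists2 r : R, 0 < r &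
    forall w, 0 < Normc.normc (w - z) -> Normc.normc (w - z) < r -> ~ poles S tau w.
  move=> tau z /(Hiso tau z) [r r0 Hr]; exists r => // w h1 h2.
  by apply: Hr; rewrite nC ?ltc0 ?ltcR.
split.
  move=> s lam mu tau Ss Htau.
  set z0 := zs s tau.
  set t := intC R lam * tau + intC R mu.
  have [l _ Hl] := Hsimple s tau Ss Htau.
  move/climitE in Hl.
  set u := - (m%:R * (intC R lam ^+ 2 * tau)).
  set v := - (m%:R * (2%:R * intC R lam)).
  set E := fun z => ee (u + v * z).
  have CE : Ct E z0.
    apply: (Ct_comp (g := fun z => u + v * z)); last exact: Ct_ee.
    apply: Ct_Lim; apply: Lim_add; first exact: Lim_const.
    by apply: Lim_mul; [exact: Lim_const | exact: Lim_id].
  have HL := Lim_mul Hl (Lim_Ct CE).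
  have e1 : 1 * (z0 + t) + - t = z0 by ring.
  have HL2 := Lim_affine HL (oner_neq0 _) e1.
  have zs' : zs (s.1 + lam%:~R, s.2 + mu%:~R) tau = z0 + t.
    by rewrite /z0 /t /zs /= !rmorphD /= !ratr_int /intC; ring.
  have Hres : simple_res (phi tau) (zs (s.1 + lam%:~R, s.2 + mu%:~R) tau) = l * E z0.
    apply: res_eq; rewrite zs'; apply: Lim_ext HL2 _.
    have [r r0 Hr] := iso tau z0 Htau.
    exists r => // w h1 h2.
    have ez : 1 * w + - t - z0 = w - (z0 + t) by ring.
    have np : ~ poles S tau (1 * w + - t) by apply: Hr; rewrite ez.
    have := Hell lam mu tau _ Htau np.
    have -> : 1 * w + - t + intC R lam * tau + intC R mu = w by rewrite /t; ring.
    move=> ->; rewrite /E /u /v ez.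
    have -> : - (m%:R * (intC R lam ^+ 2 * tau + 2%:R * intC R lam * (1 * w + - t))) =
       - (m%:R * (intC R lam ^+ 2 * tau)) + - (m%:R * (2%:R * intC R lam)) * (1 * w + - t) by ring.
    ring.
  rewrite /Dres Hres (res_eq Hl) zs' -/z0.
  set A := ee (_ * _ * (z0 + t)).
  set B := E z0.
  set Z := ee (m%:R * ratr (_ - _)).
  set W := ee (m%:R * ratr s.1 * z0).
  have key : A * B = Z * W.
    rewrite /A /B /Z /W /E -!ee_add.
    set X := (X in ee X = _).
    have -> : X = m%:R * ratr (mu%:~R * s.1 - lam%:~R * s.2) + m%:R * ratr s.1 * z0
        + (m%:R * lam%:~R * mu%:~R : R[i]).
      rewrite /X /z0 /t /u /v /zs /intC /= !rmorphD ?rmorphN !rmorphM /= !ratr_int.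
      exact: ident1.
    have -> : (m%:R * lam%:~R * mu%:~R : R[i]) = ((m%:Z * lam * mu)%:~R : R[i]).
      by rewrite !intrM.
    exact: ee_addint.
  exact: ident2 key.
move=> s a b c d tau Ss Hg Htau.
have det : a * d - b * c = 1 by case: Hg.
have [q0 HgH] := gamma_H det Htau.
set q := intC R c * tau + intC R d in q0 HgH *.
set gt := (intC R a * tau + intC R b) / q in HgH *.
set z0 := zs s gt.
set w0 := zs (a%:~R * s.1 + c%:~R * s.2, b%:~R * s.1 + d%:~R * s.2) tau.
have w0E : q^-1 * w0 + 0 = z0.
  rewrite /w0 /z0 /gt /q /zs /= !rmorphD !rmorphM /= !ratr_int.
  exact: ident3.
have [l1 _ Hl1] := Hsimple s gt Ss HgH; move/climitE in Hl1.
set K' := - (m%:R * intC R c / q).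
set F := fun w => q * (q ^ k)^-1 * ee (K' * (w * w)).
have CF : Ct F w0.
  apply: Ct_Lim; apply: Lim_mul; first exact: Lim_const.
  apply: Lim_Ct; apply: (Ct_comp (g := fun w => K' * (w * w))); last exact: Ct_ee.
  apply: Ct_Lim; apply: Lim_mul; first exact: Lim_const.
  by apply: Lim_mul; exact: Lim_id.
have HL := Lim_mul (Lim_affine Hl1 (invr_neq0 q0) w0E) (Lim_Ct CF).
have Hres : simple_res (phi tau) w0 = l1 * F w0.
  apply: res_eq; apply: Lim_ext HL _.
  have [r r0 Hr] := iso tau w0 Htau.
  exists r => // w h1 h2.
  have np : ~ poles S tau w := Hr w h1 h2.
  have := Hmod a b c d Hg tau w Htau np; rewrite -/q -/gt => Hm.
  rewrite -/z0 -w0E /F.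
  have -> : q^-1 * w + 0 = w / q by rewrite addr0 mulrC.
  rewrite Hm.
  apply: ident4 => //; first exact: expfz_neq0.
  have -> : K' * (w * w) = - (m%:R * intC R c * w ^+ 2 / q) by rewrite /K'; ring.
  exact: eeN.
rewrite /Dres (res_eq Hl1) Hres -/w0 -/z0 /F.
set X := ee (_ * _ * z0).
set Y := ee (_ * _ * w0).
set Z := ee (K' * _).
have key : Y * Z = X.
  rewrite /X /Y /Z -ee_add -w0E; congr ee.
  rewrite /K' /w0 /q /zs /= !rmorphD !rmorphM /= !ratr_int.
  apply: ident5 => //.
  by rewrite /intC -!intrM -intrB det.
apply: ident6 key _.
rewrite exprzDr ?unitfE // exprN1.
by field; rewrite expfz_neq0.
Qed.
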